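(* Let $1\le k\le n-1$ and let $\mu$ be a non-negative finite Borel measure on $G(n,n-k)$ such that $R_{n-k}^*(\mu)\ge1$ and $R_k^*(\mu^\perp)\ge1$. Then $Z=\mathrm{supp}(\mu)$ satisfies $\bigcup_{E\in Z}E\cap S^{n-1}=S^{n-1}$ and $\bigcup_{E\in Z}E^\perp\cap S^{n-1}=S^{n-1}$.
   Context: $G(n,m)$ is the Grassmannian of $m$-dimensional subspaces of $\mathbb{R}^n$. For $E\in G(n,m)$, $R_mf(E)=\int_{S^{n-1}\cap E}f\,d\sigma_E$ ($\sigma_E$ Haar probability on $S^{n-1}\cap E$), and $R_m^*:\mathcal{M}(G(n,m))\to\mathcal{M}(S^{n-1})$ is the dual on signed Borel measures, $\int f\,dR_m^*(\mu)=\int R_mf\,d\mu$. $\mu^\perp\in\mathcal{M}(G(n,k))$ is $\mu^\perp(A)=\mu(\{E^\perp:E\in A\})$. $\nu\ge1$ means $\nu-\sigma$ is a non-negative measure, $\sigma$ the Haar probability measure on $S^{n-1}$. $\mathrm{supp}(\mu)$ is the smallest closed set $Z$ with $\mu(A\setminus Z)=0$ for all Borel $A$. *)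

(* Defs.v *)
From HB Require Import structures.
From mathcomp Require Import all_boot all_order all_algebra.
From mathcomp Require Import all_classical all_reals all_analysis.
Set Implicit Arguments. Unset Strict Implicit. Unset Printing Implicit Defensive.
Import Order.TTheory GRing.Theory Num.Theory.
Import numFieldNormedType.Exports.
Local Open Scope classical_set_scope.
Local Open Scope ring_scope.

(* Conventions: points of R^n are row vectors 'rV[R]_n; a subspace E of R^n is
   encoded by its orthogonal projection matrix P (E = {x | x *m P = x}). The
   Grassmannian G(n,m) is the set of such projections of rank m, with the
   topology inherited from the space of matrices. Measures live on the Borel
   sigma-algebras of 'rV[R]_n and 'M[R]_n and are concentrated on the sphere,
   resp. on the Grassmannian. *)

Section Defs.
Variable R : realType.

Definition BV (n : nat) := g_sigma_algebraType (@open ('rV[R]_n)).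
Definition BM (n : nat) := g_sigma_algebraType (@open ('M[R]_n)).

Definition sphere (n : nat) : set 'rV[R]_n :=
  [set x | \sum_(i < n) x ord0 i ^+ 2 = 1].

Definition is_orth_proj (n : nat) (P : 'M[R]_n) : Prop :=
  P^T = P /\ P *m P = P.

Definition range_of (n : nat) (P : 'M[R]_n) : set 'rV[R]_n :=
  [set x | x *m P = x].

Definition Grass (n m : nat) : set 'M[R]_n :=
  [set P | is_orth_proj P /\ \rank P = m].

Definition orthogonal_mx (n : nat) (U : 'M[R]_n) : Prop := U *m U^T = 1%:M.

(* sig P is the Haar (O(E)-invariant) probability measure on S^{n-1} \cap E,
   for every nonzero subspace E = range P (so sig 1 is the Haar measure on S^{n-1}). *)
Definition haar_family (n : nat)
    (sig : 'M[R]_n -> {measure set (BV n) -> \bar R}) : Prop :=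
  forall P : 'M[R]_n, is_orth_proj P -> P != 0 ->
    [/\ sig P (~` (@sphere n `&` range_of P)) = 0%E,
        sig P setT = 1%E &
        forall U : 'M[R]_n, orthogonal_mx U -> U *m P = P *m U ->
          forall A : set (BV n), measurable A ->
            sig P ((fun x : 'rV[R]_n => x *m U) @^-1` A) = sig P A].

Definition radon (n : nat) (sig : 'M[R]_n -> {measure set (BV n) -> \bar R})
    (f : 'rV[R]_n -> R) (P : 'M[R]_n) : \bar R :=
  (\int[sig P]_(x in (@sphere n : set (BV n))) (f x)%:E)%E.

(* R^*(mu) >= 1 : the measure R^*(mu) on S^{n-1}, defined by duality
   \int f dR^*(mu) = \int R f dmu for f in C(S^{n-1}), dominates sigma. *)
Definition Rstar_ge1 (n : nat) (sig : 'M[R]_n -> {measure set (BV n) -> \bar R})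
    (mu : {measure set (BM n) -> \bar R}) : Prop :=
  exists nu : {measure set (BV n) -> \bar R},
    [/\ nu (~` @sphere n) = 0%E,
        (forall f : 'rV[R]_n -> R, {within @sphere n, continuous f} ->
           (\int[nu]_(x in (@sphere n : set (BV n))) (f x)%:E)%E =
           (\int[mu]_(P in [set: BM n]) radon sig f P)%E) &
        forall A : set (BV n), measurable A -> (sig 1%:M A <= nu A)%E].

(* mu^perp (A) = mu ({E^perp : E in A}); E^perp is encoded by 1 - P *)
Definition is_perp_measure (n : nat) (mu mup : {measure set (BM n) -> \bar R}) : Prop :=
  forall A : set (BM n), measurable A ->
    mup A = mu [set (1%:M - P : 'M[R]_n) | P in A].

Definition supp (n : nat) (mu : {measure set (BM n) -> \bar R}) : set 'M[R]_n :=
  \bigcap_(Z in [set Z : set 'M[R]_n | closed Z /\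
      forall A : set (BM n), measurable A -> mu (A `\` Z) = 0%E]) Z.

End Defs.
Arguments sphere {R} n.

(* Main.v *)
Require Import Defs.
From HB Require Import structures.
From mathcomp Require Import all_boot all_order all_algebra.
From mathcomp Require Import all_classical all_reals all_analysis.
From mathcomp Require Import ring lra.
Set Implicit Arguments. Unset Strict Implicit. Unset Printing Implicit Defensive.
Import Order.TTheory GRing.Theory Num.Theory.
Import numFieldNormedType.Exports.
Local Open Scope classical_set_scope.
Local Open Scope ring_scope.
Section Alg.
Variable R : realType.
Variable n : nat.
Implicit Types (u v x y z : 'rV[R]_n).

Definition nrm2 v : R := \sum_(i < n) v ord0 i ^+ 2.
Definition dot u v : R := (u *m v^T) ord0 ord0.

Lemma nrm2E v : nrm2 v = dot v v.
Proof. by rewrite /dot mxE; apply: eq_bigr => i _; rewrite mxE expr2. Qed.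

Lemma nrm2_ge0 v : 0 <= nrm2 v.
Proof. by apply: sumr_ge0 => i _; rewrite sqr_ge0. Qed.

Lemma nrm2_eq0 v : nrm2 v = 0 -> v = 0.
Proof.
move=> /eqP; rewrite psumr_eq0; last by move=> i _; rewrite sqr_ge0.
move=> /allP H; apply/rowP => i; rewrite mxE; apply/eqP.
by rewrite -sqrf_eq0; apply: (implyP (H i (mem_index_enum i))).
Qed.

Lemma dotC u v : dot u v = dot v u.
Proof. by rewrite /dot -[u *m v^T]trmxK trmx_mul trmxK mxE. Qed.

Lemma dotDl u v w : dot (u + v) w = dot u w + dot v w.
Proof. by rewrite /dot mulmxDl mxE. Qed.

Lemma dotNl u w : dot (- u) w = - dot u w.
Proof. by rewrite /dot mulNmx mxE. Qed.

Lemma dotZl a u w : dot (a *: u) w = a * dot u w.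
Proof. by rewrite /dot -scalemxAl mxE. Qed.

Lemma dotDr u v w : dot w (u + v) = dot w u + dot w v.
Proof. by rewrite dotC dotDl !(dotC w). Qed.

Lemma dotNr u w : dot w (- u) = - dot w u.
Proof. by rewrite dotC dotNl dotC. Qed.

Lemma nrm2D u v : nrm2 (u + v) = nrm2 u + 2 * dot u v + nrm2 v.
Proof.
rewrite !nrm2E dotDl !dotDr (dotC v u); ring.
Qed.

Lemma nrm2B u v : nrm2 (u - v) = nrm2 u - 2 * dot u v + nrm2 v.
Proof.
rewrite nrm2D dotNr [nrm2 (- v)]nrm2E dotNl dotNr opprK -nrm2E.
by rewrite mulrN.
Qed.

Lemma dot_mul u v (U : 'M[R]_n) : dot (u *m U) (v *m U) = dot u (v *m U *m U^T).
Proof. by rewrite /dot !trmx_mul trmxK !mulmxA. Qed.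

Lemma nrm2_orth (U : 'M[R]_n) v : U *m U^T = 1%:M -> nrm2 (v *m U) = nrm2 v.
Proof. by move=> HU; rewrite !nrm2E dot_mul -mulmxA HU mulmx1. Qed.

End Alg.
Section Refl.
Variable R : realType.
Variable n : nat.

Lemma zmod_aux (V : zmodType) (o y : V) : o - y - (y - (y + y)) = o.
Proof. by rewrite opprB addrK subrK. Qed.

Lemma reflect_ex (x z : 'rV[R]_n) : nrm2 x = 1 -> nrm2 z = 1 ->
  exists U : 'M[R]_n, U *m U^T = 1%:M /\ x *m U = z.
Proof.
move=> hx hz; have [->|xz] := eqVneq x z.
  by exists 1%:M; rewrite trmx1 !mulmx1.
set v := x - z; set c := nrm2 v.
have c0 : c != 0.
  by apply/eqP => /nrm2_eq0 /eqP; rewrite subr_eq0 (negbTE xz).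
set a := 2 / c.
set W := v^T *m v.
have WW : W *m W = c *: W.
  rewrite /W mulmxA -(mulmxA v^T) [v *m v^T]mx11_scalar.
  rewrite mul_mx_scalar -scalemxAl.
  by rewrite -/(dot v v) -nrm2E.
have WT : W^T = W by rewrite /W trmx_mul trmxK.
exists (1%:M - a *: W); split.
  rewrite [X in _ *m X]linearB /= trmx1 (_ : (a *: W)^T = a *: W); last by rewrite linearZ /= WT.
  rewrite mulmxBl mul1mx mulmxBr mulmx1 -scalemxAl -scalemxAr WW !scalerA.
  have -> : a * a * c = a + a by rewrite /a; field.
  by rewrite scalerDl zmod_aux.
rewrite mulmxBr mulmx1 -scalemxAr /W mulmxA [x *m v^T]mx11_scalar mul_scalar_mx.
rewrite scalerA -/(dot x v).
have -> : a * dot x v = 1.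
  have hc : c = 2 - 2 * dot x z by rewrite /c /v nrm2B hx hz; ring.
  have hd : dot x v = 1 - dot x z.
    by rewrite /v dotDr dotNr -nrm2E hx.
  by rewrite /a hd hc; field; rewrite -hc.
by apply/rowP => i; rewrite /v !mxE; ring.
Qed.
End Refl.
Section Cont.
Variable R : realType.

Lemma cont_sum (T : topologicalType) k (F : 'I_k -> T -> R) :
  (forall i, continuous (F i)) -> continuous (fun t => \sum_(i < k) F i t).
Proof.
elim: k F => [|k IH] F HF.
  have -> : (fun t => \sum_(i < 0) F i t) = (fun=> 0) by apply: funext => t; rewrite big_ord0.
  exact: cst_continuous.
have -> : (fun t => \sum_(i < k.+1) F i t) =
   (fun t => \sum_(i < k) F (widen_ord (leqnSn k) i) t) + (fun t => F ord_max t).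
  by apply: funext => t; rewrite big_ord_recr.
move=> t; apply: continuousD; last exact: HF.
by apply: (IH (fun i => F (widen_ord (leqnSn k) i))) => i; exact: HF.
Qed.

Lemma cont_sq (T : topologicalType) (f : T -> R) : continuous f -> continuous (fun t => f t ^+ 2).
Proof. by move=> hf t; rewrite /GRing.exp /=; apply: continuousM; exact: hf. Qed.

Lemma mx_cont (T : topologicalType) m p (f : T -> 'M[R]_(m, p)) :
  (forall i j, continuous (fun t => f t i j)) -> continuous f.
Proof.
move=> H t; apply/cvg_ballP => e e0.
have : \forall s \near t, forall i j, ball (f t i j) e (f s i j).
  apply: filter_forall => i; apply: filter_forall => j.
  by have /cvg_ballP := H i j t; apply.
apply: filter_app; near=> s => Hs.
by split.
Unshelve. all: by end_near. Qed.

End Cont.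
Section Topo.
Variable R : realType.
Variable n : nat.

Lemma cont_coordT (T : topologicalType) (g : T -> 'rV[R]_n) :
  continuous g -> forall i, continuous (fun t => g t ord0 i).
Proof. by move=> hg i t; exact: (continuous_comp (hg t) (@coord_continuous _ _ _ ord0 i (g t))). Qed.

Lemma cont_nrm2 (T : topologicalType) (g : T -> 'rV[R]_n) :
  (forall i, continuous (fun t => g t ord0 i)) -> continuous (fun t => nrm2 (g t)).
Proof. by move=> hg; apply: cont_sum => i; apply: cont_sq; exact: hg. Qed.

Lemma cont_rowmul (T : topologicalType) (g : T -> 'rV[R]_n) (Q : T -> 'M[R]_n) :
  (forall i, continuous (fun t => g t ord0 i)) ->
  (forall i j, continuous (fun t => Q t i j)) ->
  forall j, continuous (fun t => (g t *m Q t) ord0 j).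
Proof.
move=> hg hQ j.
have -> : (fun t => (g t *m Q t) ord0 j) = (fun t => \sum_i g t ord0 i * Q t i j).
  by apply: funext => t; rewrite mxE.
apply: cont_sum => i t; apply: continuousM; [exact: hg | exact: hQ].
Qed.

Lemma cont_rowB (T : topologicalType) (g h : T -> 'rV[R]_n) :
  (forall i, continuous (fun t => g t ord0 i)) ->
  (forall i, continuous (fun t => h t ord0 i)) ->
  forall i, continuous (fun t => (g t - h t) ord0 i).
Proof.
move=> hg hh i.
have -> : (fun t => (g t - h t) ord0 i) = (fun t => g t ord0 i) - (fun t => h t ord0 i).
  by apply: funext => t; rewrite !mxE.
by move=> t; apply: continuousB; [exact: hg | exact: hh].
Qed.

Lemma cont_id_coord i : continuous (fun v : 'rV[R]_n => v ord0 i).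
Proof. exact: coord_continuous. Qed.

Lemma cont_cst_coord (T : topologicalType) (c : 'rV[R]_n) i :
  continuous (fun _ : T => c ord0 i).
Proof. exact: cst_continuous. Qed.

Lemma sphere_closed : closed (sphere n : set 'rV[R]_n).
Proof.
have -> : (sphere n : set 'rV[R]_n) = (fun v : 'rV[R]_n => nrm2 v) @^-1` [set 1] by [].
apply: preimage_closed; last exact: closed_eq.
have hc := @cont_nrm2 'rV[R]_n id (fun i => @coord_continuous R 1 n ord0 i).
by move=> v _; exact: hc.
Qed.

Lemma coord_le_nrm2 (v : 'rV[R]_n) i : v ord0 i ^+ 2 <= nrm2 v.
Proof.
rewrite /nrm2 (bigD1 i) //= lerDl; apply: sumr_ge0 => j _; exact: sqr_ge0.
Qed.

Lemma sphere_compact : compact (sphere n : set 'rV[R]_n).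
Proof.
apply: bounded_closed_compact; last exact: sphere_closed.
change (\forall M \near +oo, globally (sphere n : set 'rV[R]_n) [set x | `|x| <= M]).
near=> M => v /= hv.
apply: (@le_trans _ _ 1); last by near: M; apply: nbhs_pinfty_ge; rewrite realE ler01.
rewrite -[`|v|]/(mx_norm v) mx_normrE; apply: bigmax_le => // -[i j] _ /=.
rewrite (ord1 i).
have := coord_le_nrm2 v j; rewrite /nrm2 hv => h.
rewrite -[_ <= 1](@expr_le1 _ 2) ?normr_ge0 // real_normK ?num_real //.
Unshelve. all: by end_near. Qed.

Lemma range_closed (P : 'M[R]_n) : closed (range_of P).
Proof.
have -> : range_of P = (fun v : 'rV[R]_n => nrm2 (v *m P - v)) @^-1` [set 0].
  apply: funext => v; apply: propext; rewrite /range_of /=; split.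
    by move=> ->; rewrite subrr /nrm2 big1 // => i _; rewrite mxE expr0n.
  by move/nrm2_eq0/eqP; rewrite subr_eq0 => /eqP.
apply: preimage_closed; last exact: closed_eq.
move=> v _; apply: cont_nrm2; apply: cont_rowB; last exact: coord_continuous.
apply: cont_rowmul; first exact: coord_continuous.
by move=> i j; exact: cst_continuous.
Qed.

Lemma BV_open (A : set 'rV[R]_n) : open A -> measurable (A : set (BV R n)).
Proof. by move=> oA; apply: sub_sigma_algebra. Qed.

Lemma BV_closed (A : set 'rV[R]_n) : closed A -> measurable (A : set (BV R n)).
Proof.
move=> cA; rewrite -[A]setCK; apply: measurableC; apply: BV_open.
exact: closed_openC.
Qed.

Lemma BM_open (A : set 'M[R]_n) : open A -> measurable (A : set (BM R n)).
Proof. by move=> oA; apply: sub_sigma_algebra. Qed.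

Lemma BM_closed (A : set 'M[R]_n) : closed A -> measurable (A : set (BM R n)).
Proof.
move=> cA; rewrite -[A]setCK; apply: measurableC; apply: BM_open.
exact: closed_openC.
Qed.

End Topo.
Section NullUnion.
Local Open Scope ereal_scope.
Context d (T : measurableType d) (R : realType) (mu : {measure set T -> \bar R}).

Lemma null_fin_union (I : eqType) (s : seq I) (F : I -> set T) :
  (forall i, i \in s -> measurable (F i) /\ mu (F i) = 0) ->
  measurable [set t | exists i, i \in s /\ F i t] /\
  mu [set t | exists i, i \in s /\ F i t] = 0.
Proof.
elim: s => [|a s IH] H.
  have -> : [set t | exists i, i \in [::] /\ F i t] = set0.
    by apply: funext => t; apply: propext; split => // -[i []].
  by split; [exact: measurable0 | exact: measure0].
have -> : [set t | exists i, i \in (a :: s) /\ F i t] =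
          F a `|` [set t | exists i, i \in s /\ F i t].
  apply: funext => t; apply: propext; split.
    move=> [i []]; rewrite in_cons => /orP [/eqP -> hF|hi hF]; first by left.
    by right; exists i.
  move=> [hF|[i [hi hF]]]; first by exists a; rewrite in_cons eqxx.
  by exists i; rewrite in_cons hi orbT.
have [ma za] := H a (mem_head a s).
have [ms zs] := IH (fun i hi => H i (@mem_behead _ (a :: s) i hi)).
split; first exact: measurableU.
exact: null_set_setU.
Qed.
End NullUnion.

Section SigPos.
Variable R : realType.
Variable n : nat.

Definition cap (z : 'rV[R]_n) (r : R) : set 'rV[R]_n := [set y | nrm2 (y - z) < r].

Lemma cap_open z r : open (cap z r).
Proof.
have -> : cap z r = (fun y => nrm2 (y - z)) @^-1` [set t | t < r] by [].
apply: open_comp; last exact: open_lt.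
move=> y _; apply: cont_nrm2; apply: cont_rowB; first exact: coord_continuous.
by move=> i; exact: cst_continuous.
Qed.

Lemma proj1mx : is_orth_proj (1%:M : 'M[R]_n).
Proof. by split; [rewrite trmx1 | rewrite mulmx1]. Qed.

Lemma sig_pos (sig : 'M[R]_n -> {measure set (BV R n) -> \bar R}) :
  haar_family sig -> (0 < n)%N -> forall x, sphere n x -> forall r : R, 0 < r ->
  (0 < sig 1%:M (sphere n `&` cap x r))%E.
Proof.
move=> hs n0 x hx r r0.
have one0 : (1%:M : 'M[R]_n) != 0.
  apply/eqP => /matrixP /(_ (Ordinal n0) (Ordinal n0)); rewrite !mxE eqxx /=.
  by move/eqP; rewrite oner_eq0.
have [hnull h1 hinv] := hs 1%:M proj1mx one0.
have mS : measurable (sphere n : set (BV R n)) by apply: BV_closed; exact: sphere_closed.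
have mC : forall z, measurable (sphere n `&` cap z r : set (BV R n)).
  by move=> z; apply: measurableI => //; apply: BV_open; exact: cap_open.
have heq : forall z, sphere n z -> sig 1%:M (sphere n `&` cap z r) = sig 1%:M (sphere n `&` cap x r).
  move=> z hz; have [U [hU hxU]] := reflect_ex hx hz.
  rewrite -(hinv U hU _ _ (mC z)); last by rewrite mulmx1 mul1mx.
  congr (sig _ _); apply: funext => y; apply: propext; rewrite /cap /sphere /=.
  rewrite -hxU -mulmxBl.
  have := nrm2_orth (y - x) hU; rewrite /nrm2 => ->.
  by have := nrm2_orth y hU; rewrite /nrm2 => ->.
rewrite lt_neqAle measure_ge0 andbT; apply/eqP => hz.
have [D' sD' cov] : finite_subset_cover (sphere n) (fun z => cap z r) (sphere n).
  have := @sphere_compact R n; rewrite compact_cover; apply.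
    by move=> z _; exact: cap_open.
  move=> z hz0; exists z => //; rewrite /cap /= subrr.
  by rewrite /nrm2 big1 // => i _; rewrite mxE expr0n.
have [mU zU] := @null_fin_union _ _ _ (sig 1%:M) _ (finmap.enum_fset D') (fun z => sphere n `&` cap z r)
   (fun z hz' => conj (mC z) (etrans (heq z (set_mem (sD' z hz'))) (esym hz))).
have hS1 : (1 <= sig 1%:M (sphere n))%E.
  move: hnull; set C := (~` _) => hnull.
  rewrite -h1 (_ : [set: BV R n] = sphere n `|` C); last first.
    apply: funext => y; apply: propext; split => // _.
    by have [hy|hy] := pselect (sphere n y); [left | right => -[]].
  apply: le_trans (measureU2 _ _ _) _ => //.
    by apply: measurableC; apply: measurableI => //; apply: BV_closed; exact: range_closed.
  by rewrite [X in (_ + X <= _)%E](_ : _ = 0%E) ?adde0 //; exact: hnull.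
have hSU : (sig 1%:M (sphere n) <= sig 1%:M
      [set t | (exists i, i \in finmap.enum_fset D' /\ (sphere n `&` cap i r) t)])%E.
  apply: le_measure; rewrite ?inE //.
  move=> y hy; have [z hz1 hc] := cov y hy.
  by exists z; split.
have := le_trans hS1 hSU; rewrite zU lee_fin ler10.
by [].
Qed.
End SigPos.
Section IntZero.
Local Open Scope ereal_scope.
Context d (T : measurableType d) (R : realType) (mu : {measure set T -> \bar R}).
Import HBNNSimple.

Lemma int_zero (D N : set T) (g : T -> \bar R) :
  measurable N -> mu N = 0 -> (forall x, D x -> 0 <= g x) ->
  (forall x, D x -> ~ N x -> g x = 0) -> \int[mu]_(x in D) g x = 0.
Proof.
move=> mN muN g0 gz; apply/eqP; rewrite eq_le integral_ge0 // andbT.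
rewrite ge0_integralE //; apply: ge_ereal_sup => _ [h hle <-].
rewrite -integralT_nnsfun (@ge0_negligible_integral _ _ _ mu setT N) //; last 2 first.
  - by apply/measurable_realfun.measurable_EFinP; exact: measurable_funPT.
  - by move=> x _; rewrite lee_fin fun_ge0.
rewrite integral0_eq // => x [_ nx].
apply/eqP; rewrite eq_le [(0 <= _)%E]lee_fin fun_ge0 andbT.
have := hle x; rewrite patchE; case: ifPn => [|_] //.
  by rewrite inE => Dx; rewrite gz.
Qed.
End IntZero.
Section Final.
Variable R : realType.
Variable n : nat.

Lemma nrm2N (v : 'rV[R]_n) : nrm2 (- v) = nrm2 v.
Proof. by rewrite !nrm2E dotNl dotNr opprK. Qed.

Lemma dot_proj (Q : 'M[R]_n) (u w : 'rV[R]_n) : is_orth_proj Q ->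
  dot (u *m Q) (w *m Q - w) = 0.
Proof.
move=> [QT QQ].
rewrite /dot (_ : w *m Q - w = w *m (Q - 1%:M)); last by rewrite mulmxBr mulmx1.
rewrite trmx_mul -!mulmxA (mulmxA Q) linearB /= trmx1 QT mulmxBr QQ mulmx1 subrr.
by rewrite mul0mx mulmx0 mxE.
Qed.

Lemma closest (Q : 'M[R]_n) (x y : 'rV[R]_n) : is_orth_proj Q -> y *m Q = y ->
  nrm2 (x - x *m Q) <= nrm2 (y - x).
Proof.
move=> hQ hy.
have -> : y - x = (y - x) *m Q + (x *m Q - x).
  by rewrite mulmxBl hy addrA subrK.
rewrite [X in _ <= X]nrm2D dot_proj // mulr0 addr0 -nrm2N opprB lerDr; exact: nrm2_ge0.
Qed.

Lemma final_contra (sig : 'M[R]_n -> {measure set (BV R n) -> \bar R})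
    (m : {measure set (BM R n) -> \bar R}) :
  haar_family sig -> (0 < n)%N -> Rstar_ge1 sig m ->
  forall x, sphere n x -> forall (N : set (BM R n)), measurable N -> m N = 0%E ->
  forall e : R, 0 < e ->
  (forall Q : 'M[R]_n, ~ N Q -> [/\ is_orth_proj Q, Q != 0 & e <= nrm2 (x - x *m Q)]) ->
  False.
Proof.
move=> hs n0 [nu [nu0 hint hle]] x hx N mN mN0 e e0 hQ.
pose t := 2 / e.
have te : t * e = 2 by rewrite /t; field; rewrite gt_eqF.
have t0 : 0 < t by rewrite /t divr_gt0.
pose f := fun y : 'rV[R]_n => Num.max 0 (2 - t * nrm2 (y - x)).
have fc : continuous f.
  have -> : f = (fun=> 0 : R^o) \max (fun y => 2 - t * nrm2 (y - x) : R^o).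
    by apply: funext => y.
  move=> y; apply: continuous_max; first exact: cst_continuous.
  apply: continuousB; first exact: cst_continuous.
  apply: continuousM; first exact: cst_continuous.
  apply: cont_nrm2; apply: cont_rowB; first exact: coord_continuous.
  by move=> i; exact: cst_continuous.
have f0 y : 0 <= f y by rewrite /f le_max lexx.
have fz y : e <= nrm2 (y - x) -> f y = 0.
  move=> h; rewrite /f max_l //; set a := nrm2 (y - x) in h *; nra.
have f1 y : nrm2 (y - x) < e / 2 -> 1 <= f y.
  move=> h; rewrite /f le_max; apply/orP; right.
  set a := nrm2 (y - x) in h *.
  have : t * a < t * (e / 2) by rewrite ltr_pM2l.
  have -> : t * (e / 2) = 1 by rewrite mulrA te; field.
  lra.
have H := hint f (continuous_subspaceT fc).
have hR : (\int[m]_(P in [set: BM R n]) radon sig f P = 0)%E.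
  apply: (int_zero mN mN0).
    by move=> P _; apply: integral_ge0 => y _; rewrite lee_fin.
  move=> Q _ nQ; have [hQp hQ0 hd] := hQ Q nQ.
  have [hnull _ _] := hs Q hQp hQ0.
  rewrite /radon; apply: (int_zero _ hnull).
  - apply: measurableC; apply: measurableI; apply: BV_closed.
      exact: sphere_closed.
    exact: range_closed.
  - by move=> y _; rewrite lee_fin.
  - move=> y hy hn.
    have hr : range_of Q y by apply: contrapT => hr; apply: hn => -[].
    by rewrite fz //; apply: le_trans hd _; exact: closest hQp hr.
have e20 : 0 < e / 2 by rewrite divr_gt0.
pose A := (sphere n `&` cap x (e / 2)) : set (BV R n).
have mA : measurable A.
  apply: measurableI; first by apply: BV_closed; exact: sphere_closed.
  by apply: BV_open; exact: cap_open.
have hL : (0 < \int[nu]_(y in (sphere n : set (BV R n))) (f y)%:E)%E.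
  apply: (lt_le_trans (sig_pos hs n0 hx e20)).
  apply: le_trans (hle _ mA) _.
  rewrite ge0_integralE; last by move=> y _; rewrite lee_fin.
  apply: ereal_sup_ubound => /=; exists (indic_nnsfun R mA); last exact: sintegral_indic.
  move=> y /=; rewrite /measurable_realfun.mindic indicE patchE.
  have [hA|hA] := pselect (A y).
    have hs' : y \in (sphere n : set (BV R n)) by rewrite inE; case: hA.
    rewrite hs' mem_set // lee_fin; exact: f1 (proj2 hA).
  rewrite memNset //; case: ifP => _; rewrite lee_fin //.
by move: hL; rewrite H hR ltxx.
Qed.

End Final.
Section Proj.
Variable R : realType.
Variable n : nat.

Lemma rank_tr_idem (P : 'M[R]_n) : P *m P = P -> (\rank P)%:R = \tr P.
Proof.
move=> PP.
move: (col_base P) (row_base P) (mulmx_base P) (row_base_free P) (col_base_full P).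
move=> L B hP hB hL.
have hBL : B *m L = 1%:M.
  apply: (row_free_inj hB); apply: (row_full_inj hL).
  by rewrite mul1mx !mulmxA hP -mulmxA hP PP.
by rewrite -{2}hP mxtrace_mulC hBL mxtrace1.
Qed.

Definition projset : set 'M[R]_n := [set P | is_orth_proj P].

Lemma proj_entry (P : 'M[R]_n) : is_orth_proj P -> forall i j, `|P i j| <= 1.
Proof.
move=> [PT PP] i j.
have hsym : forall a b, P a b = P b a.
  by move=> a b; rewrite -{1}PT mxE.
have hii : P i i = \sum_k P i k ^+ 2.
  by rewrite -{1}PP mxE; apply: eq_bigr => k _; rewrite (hsym k i) expr2.
have hij : P i j ^+ 2 <= P i i.
  by rewrite hii (bigD1 j) //= lerDl; apply: sumr_ge0 => k _; exact: sqr_ge0.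
have hi2 : P i i ^+ 2 <= P i i.
  by rewrite {2}hii (bigD1 i) //= lerDl; apply: sumr_ge0 => k _; exact: sqr_ge0.
have hi1 : P i i <= 1 by nra.
rewrite -[_ <= 1](@expr_le1 _ 2) ?normr_ge0 // real_normK ?num_real //.
exact: le_trans hij hi1.
Qed.

Lemma cont_mxmul (T : topologicalType) (A B : T -> 'M[R]_n) :
  (forall i j, continuous (fun t => A t i j)) ->
  (forall i j, continuous (fun t => B t i j)) ->
  forall i j, continuous (fun t => (A t *m B t) i j).
Proof.
move=> hA hB i j.
have -> : (fun t => (A t *m B t) i j) = (fun t => \sum_k A t i k * B t k j).
  by apply: funext => t; rewrite mxE.
by apply: cont_sum => k t; apply: continuousM; [exact: hA | exact: hB].
Qed.

Lemma projset_closed : closed projset.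
Proof.
have -> : projset = \bigcap_(ij in [set: 'I_n * 'I_n])
   ([set P : 'M[R]_n | P ij.2 ij.1 - P ij.1 ij.2 = 0] `&`
    [set P : 'M[R]_n | (P *m P) ij.1 ij.2 - P ij.1 ij.2 = 0]).
  apply: funext => P; apply: propext; split.
    by move=> [PT PP] [i j] _ /=; rewrite -{1}PT mxE PP !subrr.
  move=> H; split; apply/matrixP => i j; have [/= h1 h2] := H (i, j) Logic.I.
    by rewrite mxE; apply/eqP; rewrite -subr_eq0 h1.
  by apply/eqP; rewrite -subr_eq0 h2.
apply: closed_bigI => -[i j] _; apply: closedI.
  apply: (@preimage_closed _ _ (fun P : 'M[R]_n => P j i - P i j) [set 0]); last exact: closed_eq.
  by move=> P _; apply: continuousB; exact: coord_continuous.
apply: (@preimage_closed _ _ (fun P : 'M[R]_n => (P *m P) i j - P i j) [set 0]); last exact: closed_eq.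
move=> P _; apply: continuousB; last exact: coord_continuous.
by apply: cont_mxmul => a b; exact: coord_continuous.
Qed.

Lemma vec_mx_cont : continuous (fun v : 'rV[R]_(n * n) => vec_mx v : 'M[R]_n).
Proof.
apply: mx_cont => i j.
have -> : (fun v : 'rV[R]_(n * n) => (vec_mx v : 'M[R]_n) i j) =
          (fun v => v 0 (mxvec_index i j)) by apply: funext => v; rewrite mxE.
exact: coord_continuous.
Qed.

Lemma projset_compact : compact projset.
Proof.
set K' := [set v : 'rV[R]_(n * n) | projset (vec_mx v)].
have -> : projset = (fun v => vec_mx v) @` K'.
  apply: funext => P; apply: propext; split.
    by move=> hP; exists (mxvec P); rewrite /K' /= mxvecK.
  by move=> [v hv <-].
apply: continuous_compact.
  by apply: continuous_subspaceT; exact: vec_mx_cont.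
apply: bounded_closed_compact.
  change (\forall M \near +oo, globally K' [set x | `|x| <= M]).
  near=> M => v /= hv.
  apply: (@le_trans _ _ 1); last by near: M; apply: nbhs_pinfty_ge; rewrite realE ler01.
  rewrite -[`|v|]/(mx_norm v) mx_normrE; apply: bigmax_le => // -[i k] _ /=.
  rewrite (ord1 i); case/mxvec_indexP: k => a b.
  have := proj_entry hv a b; by rewrite mxE.
have -> : K' = (fun v => vec_mx v) @^-1` projset by [].
apply: preimage_closed; last exact: projset_closed.
by move=> v _; exact: vec_mx_cont.
Unshelve. all: by end_near. Qed.

Lemma Grass_eq (m : nat) : @Grass R n m = projset `&` [set P | \tr P = m%:R].
Proof.
apply: funext => P; apply: propext; split.
  by move=> [hP hr]; split => //=; rewrite -hr rank_tr_idem //; case: hP.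
move=> [hP /= ht]; split => //; apply/eqP; rewrite -(eqr_nat R) rank_tr_idem ?ht //.
by case: hP.
Qed.

Lemma Grass_closed (m : nat) : closed (@Grass R n m).
Proof.
rewrite Grass_eq; apply: closedI; first exact: projset_closed.
apply: (@preimage_closed _ _ (fun P : 'M[R]_n => \tr P) [set m%:R]); last exact: closed_eq.
by move=> P _; apply: cont_sum => i; exact: coord_continuous.
Qed.

Lemma proj_compl (P : 'M[R]_n) : is_orth_proj P -> is_orth_proj (1%:M - P).
Proof.
move=> [PT PP]; split.
  by rewrite linearB /= trmx1 PT.
by rewrite mulmxBl mul1mx mulmxBr mulmx1 PP subrr subr0.
Qed.

End Proj.
Section Cover.
Variable R : realType.
Variable n : nat.

Lemma pos_min (I : eqType) (s : seq I) (p : I -> Prop) (g : I -> R) :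
  (forall i, p i -> 0 < g i) ->
  exists e : R, 0 < e /\ forall i, i \in s -> p i -> e <= g i.
Proof.
move=> hg; elim: s => [|a s [e [e0 he]]].
  by exists 1; split => // i.
have [pa|pa] := pselect (p a).
  exists (Num.min e (g a)); split; first by rewrite lt_min e0 hg.
  move=> i; rewrite in_cons => /orP [/eqP -> _|hi hpi]; first by rewrite ge_min lexx orbT.
  by rewrite ge_min he.
exists e; split => // i; rewrite in_cons => /orP [/eqP -> //|hi hpi]; exact: he.
Qed.

Lemma cover_step (mu : {measure set (BM R n) -> \bar R}) (psi : 'M[R]_n -> 'M[R]_n)
    (x : 'rV[R]_n) (m : nat) :
  (forall i j, continuous (fun P => psi P i j)) ->
  (forall P, supp mu P -> x *m psi P != x) ->
  exists O : set 'M[R]_n, [/\ open O, mu O = 0%E &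
    exists e : R, 0 < e /\ forall Q, @Grass R n m Q -> ~ O Q -> e <= nrm2 (x - x *m psi Q)].
Proof.
move=> psic hsupp.
pose phi := fun Q => nrm2 (x - x *m psi Q).
have phic : continuous phi.
  apply: cont_nrm2; apply: cont_rowB; first by move=> i; exact: cst_continuous.
  apply: cont_rowmul => //; by move=> i; exact: cst_continuous.
have phipos : forall P, supp mu P -> 0 < phi P.
  move=> P hP; rewrite lt_neqAle nrm2_ge0 andbT eq_sym; apply/eqP => h.
  have := hsupp P hP; rewrite -subr_eq0 => /eqP; apply.
  by rewrite -opprB (nrm2_eq0 h) oppr0.
have hO : forall P, exists O : set 'M[R]_n, [/\ open O, O P,
    supp mu P -> forall Q, O Q -> phi P / 2 < phi Q &
    ~ supp mu P -> mu O = 0%E].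
  move=> P; have [hP|hP] := pselect (supp mu P).
    exists [set Q | phi P / 2 < phi Q]; split.
    - apply: (@open_comp _ _ phi [set t : R | phi P / 2 < t]); last exact: open_gt.
      by move=> Q _; exact: phic.
    - by rewrite /= ltr_pdivrMr // ltr_pMr // ?ltr1n // phipos.
    - by [].
    - by [].
  have [Z [[cZ hZ] nZ]] : exists Z : set 'M[R]_n, (closed Z /\
      forall A : set (BM R n), measurable A -> mu (A `\` Z) = 0%E) /\ ~ Z P.
    apply: contrapT => hne; apply: hP => Z hZ; apply: contrapT => nZ.
    by apply: hne; exists Z.
  exists (~` Z); split => //.
  - exact: closed_openC.
  - move=> _; rewrite -setTD; apply: hZ; exact: measurableT.
have [Of hOf] := choice hO.
have := @projset_compact R n; rewrite compact_cover => hc.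
have [D' sD' cov] := hc _ (@projset R n) Of (fun P _ => let: And4 o _ _ _ := hOf P in o)
   (fun P hP => ex_intro2 _ _ P hP (let: And4 _ i _ _ := hOf P in i)).
have [e [e0 he]] := @pos_min _ (finmap.enum_fset D') (supp mu) (fun P => phi P / 2)
  (fun P hP => divr_gt0 (phipos P hP) (ltr0Sn _ 1)).
pose F := fun P => [set Q | ~ supp mu P /\ Of P Q].
have Fo : forall P, open (F P) /\ (measurable (F P : set (BM R n)) /\ mu (F P) = 0%E).
  move=> P; have [oP _ _ hz] := hOf P; have [hP|hP] := pselect (supp mu P).
    have -> : F P = set0 by apply: funext => Q; apply: propext; split => // -[].
    by split; [exact: open0 | split; [exact: measurable0 | exact: measure0]].
  have -> : F P = Of P by apply: funext => Q; apply: propext; split => [[]|] //.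
  by split => //; split; [exact: BM_open | exact: hz].
have [_ z0] := null_fin_union (fun P (_ : P \in finmap.enum_fset D') => (Fo P).2).
exists [set t | exists i, i \in finmap.enum_fset D' /\ F i t]; split => //.
  have -> : [set t | exists i, i \in finmap.enum_fset D' /\ F i t] =
      \bigcup_(i in [set i | i \in finmap.enum_fset D']) F i.
    apply: funext => t; apply: propext; split; first by move=> [i [hi hF]]; exists i.
    by move=> [i hi hF]; exists i.
  by apply: bigcup_open => i _; exact: (Fo i).1.
exists e; split => // Q hG nO.
have hK : projset Q by case: hG.
have [P hP hOP] := cov Q hK.
have [sP|sP] := pselect (supp mu P).
  apply: le_trans (he P hP sP) _; apply: ltW.
  have [_ _ h3 _] := hOf P; exact: h3 sP Q hOP.
by exfalso; apply: nO; exists P.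
Qed.

End Cover.
Theorem mainTheorem17 (R : realType) (n k : nat)
  (sig : 'M[R]_n -> {measure set (BV R n) -> \bar R})
  (mu : {finite_measure set (BM R n) -> \bar R}) :
  haar_family sig ->
  (1 <= k)%N -> (k <= n.-1)%N ->
  mu (~` @Grass R n (n - k)) = 0%E ->
  Rstar_ge1 sig mu ->
  (exists mup : {measure set (BM R n) -> \bar R},
      is_perp_measure mu mup /\ Rstar_ge1 sig mup) ->
  forall x : 'rV[R]_n, sphere n x ->
    (exists P, supp mu P /\ range_of P x) /\
    (exists P, supp mu P /\ range_of (1%:M - P) x).
Proof.
move=> hs k1 kn hG hR1 [mup [hperp hR2]] x hx.
have n0 : (0 < n)%N by case: n kn {hs hG hR1 hperp hR2 x hx sig mu mup} => //=; rewrite leqn0 => /eqP k0; rewrite k0 in k1.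
have nk : (0 < n - k)%N.
  rewrite subn_gt0; apply: leq_trans (leq_ltn_trans kn _) (leqnn n).
  by rewrite prednK.
have nkn : (n - k)%N != n.
  by rewrite neq_ltn; apply/orP; left; rewrite ltn_subrL k1 n0.
set m := (n - k)%N in hG nk nkn *.
have Gm : measurable (@Grass R n m : set (BM R n)) by apply: BM_closed; exact: Grass_closed.
have Gnz : forall Q : 'M[R]_n, @Grass R n m Q -> Q != 0.
  move=> Q [_ hr]; apply/eqP => Q0; move: hr; rewrite Q0 mxrank0 => h.
  by move: nk; rewrite -h.
have G1 : ~ @Grass R n m 1%:M.
  by move=> [_ hr]; move: hr; rewrite mxrank1 => h; move: nkn; rewrite h eqxx.
split.
  apply: contrapT => hno.
  have hsupp : forall P, supp mu P -> x *m (fun P : 'M[R]_n => P) P != x.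
    by move=> P hP; apply/eqP => h; apply: hno; exists P.
  have [Ob [oO muO [e [e0 he]]]] := @cover_step R n mu (fun P => P) x m
     (fun i j => @coord_continuous R n n i j) hsupp.
  apply: (@final_contra R n sig mu hs n0 hR1 x hx (~` @Grass R n m `|` Ob) _ _ e e0).
  - by apply: measurableU; [exact: measurableC | exact: BM_open].
  - by apply: null_set_setU => //; [exact: measurableC | exact: BM_open].
  - move=> Q hQ.
    have hGQ : @Grass R n m Q by apply: contrapT => h; apply: hQ; left.
    have nOQ : ~ Ob Q by move=> h; apply: hQ; right.
    split; [by case: hGQ | exact: Gnz | exact: he].
apply: contrapT => hno.
pose psi := fun P : 'M[R]_n => 1%:M - P.
have psic : forall i j, continuous (fun P => psi P i j).
  move=> i j.
  have -> : (fun P => psi P i j) = (fun P : 'M[R]_n => (1%:M : 'M[R]_n) i j - P i j).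
    by apply: funext => P; rewrite /psi !mxE.
  by move=> P; apply: continuousB; [exact: cst_continuous | exact: coord_continuous].
have psicont : continuous psi by apply: mx_cont.
have hsupp : forall P, supp mu P -> x *m psi P != x.
  by move=> P hP; apply/eqP => h; apply: hno; exists P.
have [Ob [oO muO [e [e0 he]]]] := @cover_step R n mu psi x m psic hsupp.
set N' := [set Q : 'M[R]_n | ~ @Grass R n m (psi Q)] `|` [set Q | Ob (psi Q)].
have mN' : measurable (N' : set (BM R n)).
  apply: measurableU.
    apply: measurableC; apply: BM_closed.
    apply: (@preimage_closed _ _ psi (@Grass R n m)); last exact: Grass_closed.
    by move=> Q _; exact: psicont.
  apply: BM_open; apply: (@open_comp _ _ psi Ob); last exact: oO.
  by move=> Q _; exact: psicont.
have hN' : mup N' = 0%E.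
  rewrite hperp //.
  have -> : [set (1%:M - P : 'M[R]_n) | P in N'] = ~` @Grass R n m `|` Ob.
    apply: funext => Q; apply: propext; split; first by move=> [P hP <-].
    by move=> hQ; exists (1%:M - Q); rewrite /N' /psi /= subKr.
  by apply: null_set_setU => //; [exact: measurableC | exact: BM_open].
apply: (@final_contra R n sig mup hs n0 hR2 x hx N' mN' hN' e e0).
move=> Q hQ.
have hGQ : @Grass R n m (psi Q) by apply: contrapT => h; apply: hQ; left.
have nOQ : ~ Ob (psi Q) by move=> h; apply: hQ; right.
have := he _ hGQ nOQ; rewrite /psi subKr => hd.
split => //.
- have := proj_compl (proj1 hGQ); by rewrite /psi subKr.
- by apply/eqP => Q0; apply: G1; move: hGQ; rewrite /psi Q0 subr0.
Qed.
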